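(* Let $d\geq 2$. Suppose a finite bipartite graph $G$ with vertex classes $A$ and $B$ satisfies $|A|\geq d^6|B|$, $d_G(x,y)\leq d$ for all distinct $x,y\in B$, and $d_G(v)\leq d$ for every $v\in A$. Then $G$ contains a subgraph $G'$ which is $C_4$-free and has average degree at least $d(G)/5$.
   Context: $d(G)=2e(G)/|V(G)|$ is the average degree, $d_G(v)$ the degree of $v$, and the codegree $d_G(x,y)$ is the number of common neighbours of $x$ and $y$. A graph is $C_4$-free if it contains no $4$-cycle as a subgraph. *)

(* Defs.v *)
From mathcomp Require Import all_boot all_order all_algebra.
Set Implicit Arguments. Unset Strict Implicit. Unset Printing Implicit Defensive.
Import Order.TTheory GRing.Theory Num.Theory.

Section Graphs.
Variable T : finType.

Definition simple_graph (e : rel T) : Prop :=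
  (forall x y, e x y = e y x) /\ (forall x, ~~ e x x).

Definition deg (e : rel T) (v : T) : nat := #|[set u | e v u]|.

(* codegree d_G(x,y): number of common neighbours *)
Definition codeg (e : rel T) (x y : T) : nat := #|[set v | e x v && e y v]|.

Definition bipartite_with (e : rel T) (A B : {set T}) : Prop :=
  [disjoint A & B] /\ A :|: B = [set: T] /\
  (forall x y, e x y -> (x \in A) && (y \in B) || (x \in B) && (y \in A)).

Definition subgraph (e : rel T) (S : {set T}) (e' : rel T) : Prop :=
  (forall x y, e' x y = e' y x) /\
  (forall x y, e' x y -> [&& e x y, x \in S & y \in S]).

Definition deg_in (S : {set T}) (e' : rel T) (v : T) : nat :=
  #|[set u in S | e' v u]|.

(* average degree 2 e(G)/|V(G)| = (sum of degrees)/|V|, as a rational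
   (0 for the empty vertex set) *)
Definition avg_deg (S : {set T}) (e' : rel T) : rat :=
  ((\sum_(v in S) deg_in S e' v)%N)%:R / (#|S|)%:R.

Definition C4_free (S : {set T}) (e' : rel T) : Prop :=
  ~ exists a b c d : T,
      [/\ [&& a \in S, b \in S, c \in S & d \in S],
          [&& a != b, a != c, a != d, b != c, b != d & c != d] &
          [&& e' a b, e' b c, e' c d & e' d a]].
End Graphs.

(* Main.v *)
Require Import Defs.
From mathcomp Require Import all_boot all_order all_algebra.
From mathcomp Require Import zify.
Import Order.TTheory GRing.Theory Num.Theory.
Set Implicit Arguments. Unset Strict Implicit. Unset Printing Implicit Defensive.

Lemma card_bigcup_leq (T I : finType) (P : pred I) (F : I -> {set T}) :
  (#|\bigcup_(i | P i) F i| <= \sum_(i | P i) #|F i|)%N.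
Proof.
elim/big_rec2: _ => [|i X s _ H]; first by rewrite cards0.
apply: leq_trans (leq_card_setU _ _) _; exact: leq_add.
Qed.

Lemma greedy (T : finType) (H : rel T) (w : T -> nat) (D : nat) :
  (forall x y, H x y = H y x) -> forall U : {set T},
  (forall x, x \in U -> #|[set y in U | H x y]| <= D)%N ->
  exists I : {set T}, [/\ I \subset U,
    (forall x y, x \in I -> y \in I -> x != y -> ~~ H x y) &
    (\sum_(x in U) w x <= D.+1 * \sum_(x in I) w x)%N].
Proof.
move=> Hs U; move: {2}#|U|.+1 (ltnSn #|U|) => k; elim: k U => [|k IH] U hk hU //.
case: (set_0Vmem U) => [->|[a0 a0U]].
  by exists set0; rewrite sub0set big_set0; split => // x y; rewrite in_set0.
case: (arg_maxnP w (P := fun i => i \in U) a0U) => a aU amax.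
set Nb := a |: [set y in U | H a y].
set U' := U :\: Nb.
have aNb : a \in Nb by rewrite /Nb setU11.
have hU' : #|U'| < k.
  rewrite -ltnS; apply: leq_trans hk; rewrite ltnS.
  apply: proper_card; apply/properP; split; first exact: subsetDl.
  by exists a => //; rewrite /U' in_setD aNb.
have [|I' [sI' indI' sumI']] := IH U' hU'.
  move=> x; rewrite /U' in_setD => /andP[_ xU].
  apply: leq_trans (hU x xU); apply: subset_leq_card; apply/subsetP => y.
  by rewrite !inE => /andP[/andP[_ ->] ->].
have aI' : a \notin I'.
  by apply/negP => /(subsetP sI'); rewrite /U' in_setD aNb.
exists (a |: I'); split.
- rewrite subUset sub1set aU /=; apply: subset_trans sI' _; exact: subsetDl.
- have key : forall y, y \in I' -> ~~ H a y.
    move=> y /(subsetP sI'); rewrite /U' /Nb !inE negb_or.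
    by case/andP=> /andP[_ ]; rewrite negb_and => /orP[/negP ?|//] yU; exfalso.
  move=> x y; rewrite !inE => /orP[/eqP->|xI] /orP[/eqP->|yI]; rewrite ?eqxx //.
  + by move=> _; apply: key.
  + by move=> _; rewrite Hs; apply: key.
  + exact: indI'.
- rewrite big_setU1 //= (big_setID Nb) /= mulnDr.
  apply: leq_add; last exact: sumI'.
  apply: leq_trans (_ : \sum_(x in U :&: Nb) w a <= _)%N.
    by apply: leq_sum => x; rewrite inE => /andP[xU _]; exact: amax.
  rewrite sum_nat_const; apply: leq_mul => //.
  apply: leq_trans (subset_leq_card (subsetIr U Nb)) _.
  rewrite /Nb cardsU1 -addn1 addnC; apply: leq_add; first exact: (hU a aU).
  by case: (_ \notin _).
Qed.

Lemma deg_sum (T : finType) (e : rel T) v : deg e v = (\sum_u (e v u : nat))%N.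
Proof.
rewrite /deg -sum1_card big_mkcond /=; apply: eq_bigr => u _.
by rewrite inE; case: (e v u).
Qed.

Lemma avg_ge0 (T : finType) (S : {set T}) e : (0 <= avg_deg S e)%R.
Proof. by rewrite /avg_deg divr_ge0 ?ler0n. Qed.

Theorem lemma12 (T : finType) (e : rel T) (A B : {set T}) (d : nat) :
  simple_graph e ->
  bipartite_with e A B ->
  (2 <= d)%N ->
  (d ^ 6 * #|B| <= #|A|)%N ->
  (forall x y, x \in B -> y \in B -> x != y -> (codeg e x y <= d)%N) ->
  (forall v, v \in A -> (deg e v <= d)%N) ->
  exists (S : {set T}) (e' : rel T),
    [/\ subgraph e S e', C4_free S e' &
        (avg_deg [set: T] e / 5%:R <= avg_deg S e')%R].
Proof.
move=> [esym eirr] [dAB [cov bip]] d2 hsize hcod hdeg.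
have sideB : forall x y, x \in A -> e x y -> y \in B.
  by move=> x y xA /bip; rewrite xA (disjointFr dAB xA) /= orbF.
have sideA : forall x y, x \in B -> e x y -> y \in A.
  by move=> x y xB /bip; rewrite xB (disjointFl dAB xB) /=.
have AorB : forall x, (x \in A) || (x \in B).
  by move=> x; have := in_setT x; rewrite -cov inE.
set n := #|T|.
set m2 := (\sum_(v in [set: T]) deg e v)%N.
have avgG : avg_deg [set: T] e = (m2%:R / n%:R)%R.
  rewrite /avg_deg cardsT /m2; congr (_%:R / _)%R; apply: eq_bigr => v _.
  by rewrite /deg_in /deg; apply: eq_card => u; rewrite !inE.
rewrite avgG.
have [m20|m2pos] := posnP m2.
  exists set0, (fun _ _ => false); split.
  - by split.
  - by move=> [a [b [c [dd [_ _ /and4P[]]]]]].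
  - by rewrite m20 !mul0r avg_ge0.
pose H := fun x y => (1 < codeg e x y)%N.
have Hs : forall x y, H x y = H y x.
  by move=> x y; rewrite /H /codeg; congr (_ < _)%N; apply: eq_card => v; rewrite !inE andbC.
pose U := [set a in A | (m2 <= 5 * n * deg e a)%N].
pose w := fun a => (5 * n * deg e a - m2)%N.
have UA : U \subset A by apply/subsetP => x; rewrite inE => /andP[].
have confl : forall x, x \in U -> (#|[set y in U | H x y]| <= d ^ 3)%N.
  move=> x /(subsetP UA) xA.
  pose Na := [set u | e x u].
  pose F := fun u z => [set v | [&& z != u, e u v & e z v]].
  have sub : [set y in U | H x y] \subset \bigcup_(u in Na) \bigcup_(z in Na) F u z.
    apply/subsetP => y; rewrite inE => /andP[_ /card_gt1P [u [z [uin zin uz]]]].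
    move: uin zin; rewrite !inE => /andP[xu yu] /andP[xz yz].
    apply/bigcupP; exists u; first by rewrite inE.
    apply/bigcupP; exists z; first by rewrite inE.
    by rewrite inE eq_sym uz (esym u y) (esym z y) yu yz.
  apply: leq_trans (subset_leq_card sub) _.
  apply: leq_trans (card_bigcup_leq _ _) _.
  apply: leq_trans (_ : \sum_(u in Na) \sum_(z in Na) d <= _)%N.
    apply: leq_sum => u uN; apply: leq_trans (card_bigcup_leq _ _) _.
    apply: leq_sum => z zN.
    have uB : u \in B by apply: (sideB x); rewrite // inE in uN.
    have zB : z \in B by apply: (sideB x); rewrite // inE in zN.
    case: (eqVneq z u) => [->|zu].
      apply: leq_trans (_ : #|(set0 : {set T})| <= d)%N; last by rewrite cards0.
      by apply: subset_leq_card; apply/subsetP => v; rewrite inE eqxx.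
    apply: leq_trans (hcod u z uB zB _); last by rewrite eq_sym.
    by apply: subset_leq_card; apply/subsetP => v; rewrite !inE zu.
  rewrite !sum_nat_const.
  have hN : (#|Na| <= d)%N by apply: hdeg.
  by rewrite expnS expnS expn1; apply: leq_mul => //; apply: leq_mul.
have [I [IU indI sumI]] := greedy w Hs confl.
pose mA := (\sum_(a in A) deg e a)%N.
have SetB : [set: T] :\: A = B.
  apply/setP => x; rewrite !inE; have := AorB x.
  case xA: (x \in A) => /=; last by [].
  by rewrite (disjointFr dAB xA).
have m2E : m2 = (mA + mA)%N.
  rewrite /m2 (big_setID A) /= setTI SetB; congr (_ + _)%N.
  rewrite /mA.
  transitivity (\sum_(b in B) \sum_(a in A) (e b a : nat))%N.
    apply: eq_bigr => b bB; rewrite deg_sum [RHS]big_mkcond /=; apply: eq_bigr => a _.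
    by case eba: (e b a); rewrite ?(sideA b a bB eba) //; case: (_ \in _).
  rewrite exchange_big /=; apply: eq_bigr => a aA; rewrite deg_sum [RHS](bigID (fun b => b \in B)) /=.
  rewrite [X in (_ + X)%N]big1 ?addn0; last first.
    by move=> b bB; case eab: (e a b); rewrite // (sideB a b aA eab) in bB.
  by apply: eq_bigr => b _; rewrite esym.
have sAU : (\sum_(a in A) w a <= \sum_(a in U) w a)%N.
  rewrite [X in (X <= _)%N]big_mkcond [X in (_ <= X)%N]big_mkcond /=.
  apply: leq_sum => a _; rewrite inE.
  case: (a \in A) => //=; case: ifP => // /negbT; rewrite -ltnNge /w => h; lia.
have h1 : (5 * n * mA <= \sum_(a in A) w a + #|A| * m2)%N.
  rewrite /mA big_distrr /= -sum_nat_const -big_split /=.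
  by apply: leq_sum => a _; rewrite /w; lia.
have Ale : (#|A| <= n)%N by apply: max_card.
have h2 : (3 * n * m2 <= 2 * (d ^ 3).+1 * \sum_(a in I) w a)%N.
  rewrite -mulnA; apply: leq_trans (_ : 2 * \sum_(a in A) w a <= _)%N; last first.
    by rewrite -mulnA leq_mul2l /=; apply: leq_trans sAU sumI.
  have : (#|A| * m2 <= n * m2)%N by apply: leq_mul.
  rewrite m2E in h1 *; nia.
have h3 : (2 * (d ^ 3).+1 * (#|B| * m2) <= 3 * n * m2)%N.
  have d3 : (8 <= d ^ 3)%N by rewrite (_ : 8 = 2 ^ 3)%N // leq_exp2r.
  have h6 : (d ^ 6 = d ^ 3 * d ^ 3)%N by rewrite -expnD.
  have : (2 * (d ^ 3).+1 <= 3 * d ^ 6)%N by rewrite h6; nia.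
  move: hsize; rewrite /n h6 => hs hc.
  have : (d ^ 3 * d ^ 3 * #|B| <= #|T|)%N by apply: leq_trans hs Ale.
  move: hc; set D := (d ^ 3 * d ^ 3)%N; nia.
have hB : (#|B| * m2 <= \sum_(a in I) w a)%N.
  by rewrite -(@leq_pmul2l (2 * (d ^ 3).+1)) // (leq_trans h3 h2).
have IA : forall a, a \in I -> a \in A.
  by move=> a /(subsetP IU) /(subsetP UA).
have hI : (m2 * (#|I| + #|B|) <= 5 * n * \sum_(a in I) deg e a)%N.
  rewrite big_distrr /=.
  apply: leq_trans (_ : \sum_(a in I) (w a + m2) <= _)%N.
    by rewrite big_split /= sum_nat_const; move: hB; nia.
  apply: leq_sum => a aI; move/(subsetP IU): aI; rewrite inE => /andP[_ h].
  rewrite /w; lia.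
pose S := I :|: B.
pose e' := fun x y => e x y && ((x \in I) || (y \in I)).
have IB : forall x y, x \in I -> e x y -> y \in B by move=> x y /IA; apply: sideB.
have degS : forall a, a \in I -> deg_in S e' a = deg e a.
  move=> a aI; rewrite /deg_in /deg; apply: eq_card => u; rewrite !inE /e' aI /= andbT.
  by case eau: (e a u); rewrite ?andbF // (IB a u aI eau) orbT.
have Bpos : (0 < #|B|)%N.
  move: m2pos; rewrite m2E; case: (posnP #|B|) => // /eqP; rewrite cards_eq0 => /eqP B0.
  rewrite /mA big1 // => a aA; rewrite /deg; apply/eqP; rewrite cards_eq0; apply/eqP/setP => u.
  rewrite !inE; apply/negP => eau; have := sideB a u aA eau; by rewrite B0 inE.
have npos : (0 < n)%N by apply: leq_trans Bpos (max_card _).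
exists S, e'; split.
- split; first by move=> x y; rewrite /e' esym orbC.
  move=> x y /andP[exy /orP[xI|yI]]; rewrite exy /S !inE.
    by rewrite xI (IB x y xI exy) orbT.
  by rewrite yI (IB y x yI) ?orbT // esym.
- move=> [a [b [c [dd [_ /and5P[ab ac ad bc /andP[bd cd]] /and4P[eab ebc ecd eda]]]]]].
  move: eab ebc ecd eda; rewrite /e' => /andP[eab ab'] /andP[ebc bc'] /andP[ecd cd'] /andP[eda da'].
  case aI: (a \in I).
    have cI : c \in I.
      move: ab'; rewrite aI /= => _; case bI: (b \in I) => //.
        by have := IB a b aI eab; rewrite (disjointFr dAB (IA b bI)).
      by move: bc'; rewrite bI.
    have : H a c.
      apply/card_gt1P; exists b, dd; split => //; rewrite inE ?eab ?ecd.
      + by rewrite esym ebc.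
      + by rewrite esym eda.
    by apply/negP; apply: indI.
  have bI : b \in I by move: ab'; rewrite aI.
  have dI : dd \in I by move: da'; rewrite aI orbF.
  have : H b dd.
    apply/card_gt1P; exists a, c; split => //; rewrite inE ?ebc ?eda.
    + by rewrite esym eab.
    + by rewrite esym ecd.
  by apply/negP; apply: indI.
- have Scard : (#|S| <= #|I| + #|B|)%N by rewrite /S; apply: leq_card_setU.
  have Spos : (0 < #|S|)%N by apply: leq_trans Bpos _; apply: subset_leq_card; apply: subsetUr.
  have sumS : (\sum_(a in I) deg e a <= \sum_(v in S) deg_in S e' v)%N.
    rewrite [X in (_ <= X)%N](big_setID I) /= /S setUK -[X in (X <= _)%N]addn0; apply: leq_add => //.
    by rewrite leq_eqVlt; apply/orP; left; apply/eqP; apply: eq_bigr => a aI; rewrite degS.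
  rewrite /avg_deg ler_pdivlMr ?ltr0n // mulrAC ler_pdivrMr ?ltr0n //.
  rewrite mulrAC ler_pdivrMr ?ltr0n // -!natrM ler_nat.
  apply: leq_trans (_ : m2 * (#|I| + #|B|) <= _)%N; first by rewrite leq_mul2l Scard orbT.
  apply: leq_trans hI _; move: sumS; nia.
Qed.
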